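(* Let $(Q,P)$ be a weakly quasi-lattice ordered group and let $\Lambda$ be a $P$-graph with $\mathrm{FA}(\Lambda)\neq\emptyset$. If $\lambda\in x\in\mathcal{X}(\Lambda)$, then $\lambda^*\cdot x\in\mathcal{X}(\Lambda)$.
   Context: $(Q,P)$ weakly quasi-lattice ordered: $Q$ a discrete group, $P\subseteq Q$ a subsemigroup containing the identity $e$ with $P\cap P^{-1}=\{e\}$, and, with $p\le r$ meaning $pq=r$ for some $q\in P$, any two elements of $P$ with a common upper bound have a least common upper bound. A $P$-graph is a countable small category $\Lambda$ (range/source $r,s$) with a functor $d:\Lambda\to P$ with unique factorisation (if $d(\lambda)=pq$ there are unique $\mu,\nu$ with $\lambda=\mu\nu$, $d(\mu)=p$, $d(\nu)=q$). Write $\lambda\Lambda=\{\lambda\mu: s(\lambda)=r(\mu)\}$, $\mu\preceq\lambda$ iff $\lambda\in\mu\Lambda$. $\mathrm{FA}(\Lambda)$ is the set of $\lambda$ such that for all $\mu\in\lambda\Lambda,\nu\in\Lambda$ there is finite $J\subseteq\Lambda$ with $\mu\Lambda\cap\nu\Lambda=\bigcup_{\kappa\in J}\kappa\Lambda$. A filter is a nonempty hereditary and directed subset of $\Lambda$ (w.r.t. $\preceq$). The path space is $\mathcal{X}(\Lambda)=\{x\text{ filter}: x\cap\mathrm{FA}(\Lambda)\neq\emptyset\}$. For a filter $x$ and $\lambda\in x$, $\lambda^*\cdot x=\{\mu\in\Lambda:\lambda\mu\in x\}$. *)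

(* Defs.v *)
From Stdlib Require Import List.
Import ListNotations.
Set Implicit Arguments.

Record Group := {
  gcar :> Type;
  gmul : gcar -> gcar -> gcar;
  gone : gcar;
  ginv : gcar -> gcar;
  gmulA : forall a b c, gmul a (gmul b c) = gmul (gmul a b) c;
  gmul1l : forall a, gmul gone a = a;
  gmul1r : forall a, gmul a gone = a;
  gmulVl : forall a, gmul (ginv a) a = gone;
  gmulVr : forall a, gmul a (ginv a) = gone
}.

Definition ple {Q : Group} (P : Q -> Prop) (p r : Q) : Prop :=
  exists q, P q /\ gmul Q p q = r.

Definition WQLO {Q : Group} (P : Q -> Prop) : Prop :=
  (forall p q, P p -> P q -> P (gmul Q p q)) /\
  P (gone Q) /\
  (forall p, P p -> P (ginv Q p) -> p = gone Q) /\
  (forall p q, P p -> P q ->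
     (exists r, P r /\ ple P p r /\ ple P q r) ->
     exists s, P s /\ ple P p s /\ ple P q s /\
       (forall r, P r -> ple P p r -> ple P q r -> ple P s r)).

(** A P-graph: a countable small category (morphisms [Mor], objects [Obj],
    composition [comp l m] meaningful when [src l = rng m]) with a degree
    functor [d] into P having the unique factorisation property. *)
Record PGraph {Q : Group} (P : Q -> Prop) := {
  Obj : Type;
  Mor : Type;
  rng : Mor -> Obj;
  src : Mor -> Obj;
  idm : Obj -> Mor;
  comp : Mor -> Mor -> Mor;
  rng_id : forall v, rng (idm v) = v;
  src_id : forall v, src (idm v) = v;
  rng_comp : forall l m, src l = rng m -> rng (comp l m) = rng l;
  src_comp : forall l m, src l = rng m -> src (comp l m) = src m;
  comp_id_l : forall l, comp (idm (rng l)) l = l;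
  comp_id_r : forall l, comp l (idm (src l)) = l;
  compA : forall l m n, src l = rng m -> src m = rng n ->
    comp l (comp m n) = comp (comp l m) n;
  obj_count : exists f : Obj -> nat, forall a b, f a = f b -> a = b;
  mor_count : exists f : Mor -> nat, forall a b, f a = f b -> a = b;
  deg : Mor -> Q;
  deg_P : forall l, P (deg l);
  deg_id : forall v, deg (idm v) = gone Q;
  deg_comp : forall l m, src l = rng m -> deg (comp l m) = gmul Q (deg l) (deg m);
  fact : forall l p q, P p -> P q -> deg l = gmul Q p q ->
    exists m n, src m = rng n /\ l = comp m n /\ deg m = p /\ deg n = q /\
      forall m' n', src m' = rng n' -> l = comp m' n' -> deg m' = p ->
        deg n' = q -> m' = m /\ n' = n
}.

Section PG.
Variables (Q : Group) (P : Q -> Prop) (L : PGraph P).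

Definition extset (l : Mor L) : Mor L -> Prop :=
  fun t => exists m, src L l = rng L m /\ t = comp L l m.

Definition prec (m l : Mor L) : Prop := extset m l.

Definition FA (l : Mor L) : Prop :=
  forall m n, extset l m ->
    exists J : list (Mor L),
      forall t, (extset m t /\ extset n t) <-> exists k, In k J /\ extset k t.

Definition is_filter (x : Mor L -> Prop) : Prop :=
  (exists l, x l) /\
  (forall m l, prec m l -> x l -> x m) /\
  (forall l m, x l -> x m -> exists n, x n /\ prec l n /\ prec m n).

Definition path_space (x : Mor L -> Prop) : Prop :=
  is_filter x /\ exists l, x l /\ FA l.

Definition star (l : Mor L) (x : Mor L -> Prop) : Mor L -> Prop :=
  fun m => src L l = rng L m /\ x (comp L l m).

End PG.

Arguments extset {Q P L} l.
Arguments prec {Q P L} m l.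
Arguments FA {Q P L} l.
Arguments is_filter {Q P L} x.
Arguments path_space {Q P L} x.
Arguments star {Q P L} l x.

(* Main.v *)
Require Import Defs.
From Stdlib Require Import List Classical.
Import ListNotations.

Lemma gcancel (Q : Group) (a b c : Q) : gmul Q a b = gmul Q a c -> b = c.
Proof.
  intro H.
  rewrite <- (gmul1l Q b), <- (gmul1l Q c), <- (gmulVl Q a), <- !gmulA, H.
  reflexivity.
Qed.

Lemma lcancel {Q : Group} {P : Q -> Prop} (L : PGraph P) (l a b : Mor L) :
  src L l = rng L a -> src L l = rng L b -> comp L l a = comp L l b -> a = b.
Proof.
  intros Ha Hb E.
  assert (Hd : deg L a = deg L b).
  { apply (gcancel Q (deg L l)). rewrite <- !deg_comp by assumption.
    rewrite E; reflexivity. }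
  destruct (fact L (comp L l a) (deg L l) (deg L a) (deg_P L l) (deg_P L a)
    (deg_comp L l a Ha)) as [m [n [_ [_ [_ [_ U]]]]]].
  destruct (U l a Ha eq_refl eq_refl eq_refl) as [_ E1].
  destruct (U l b Hb E eq_refl (eq_sym Hd)) as [_ E2].
  congruence.
Qed.

Lemma FA_ext {Q : Group} {P : Q -> Prop} (L : PGraph P) (k c : Mor L) :
  src L k = rng L c -> FA k -> FA (comp L k c).
Proof.
  intros Hc HF m n [d [Hd ->]].
  apply HF. exists (comp L c d).
  rewrite src_comp in Hd by assumption.
  split.
  - rewrite rng_comp by assumption. assumption.
  - symmetry; apply compA; assumption.
Qed.

Lemma build_list {Q : Group} {P : Q -> Prop} (L : PGraph P) (l : Mor L)
  (J : list (Mor L)) :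
  (forall k, In k J -> exists k', src L l = rng L k' /\ k = comp L l k') ->
  exists J', (forall k, In k J -> exists k', In k' J' /\ src L l = rng L k' /\ k = comp L l k')
    /\ (forall k', In k' J' -> src L l = rng L k' /\ In (comp L l k') J).
Proof.
  induction J as [|a J IH]; intro H.
  - exists []. split; intros k Hk; destruct Hk.
  - destruct IH as [J' [H1 H2]].
    { intros k Hk. apply H. right. exact Hk. }
    destruct (H a (or_introl eq_refl)) as [a' [Ha' Ea']].
    exists (a' :: J'). split.
    + intros k [Hk|Hk].
      * subst k. exists a'. split; [left; reflexivity| auto].
      * destruct (H1 k Hk) as [k' [? ?]]. exists k'. split; [right; assumption| assumption].
    + intros k' [Hk|Hk].
      * subst k'. split; [assumption| left; assumption].
      * destruct (H2 k' Hk). split; [assumption| right; assumption].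
Qed.

Lemma FA_strip {Q : Group} {P : Q -> Prop} (L : PGraph P) (l m0 : Mor L) :
  src L l = rng L m0 -> FA (comp L l m0) -> FA m0.
Proof.
  intros Hm0 HF m' nu [a [Ha ->]].
  assert (Rm' : rng L (comp L m0 a) = src L l) by (rewrite rng_comp; auto).
  set (m' := comp L m0 a) in *.
  destruct (classic (src L l = rng L nu)) as [Hnu|Hnu].
  2:{ exists []. intro t. split.
      - intros [[a1 [Ha1 ->]] [b1 [Hb1 E]]]. exfalso. apply Hnu.
        rewrite <- Rm', <- (rng_comp L m' a1 Ha1), E, rng_comp; auto.
      - intros [k [[] _]]. }
  assert (Hext : extset (comp L l m0) (comp L l m')).
  { exists a. split.
    - rewrite src_comp; assumption.
    - unfold m'. apply compA; assumption. }
  destruct (HF _ (comp L l nu) Hext) as [J HJ].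
  destruct (build_list L l J) as [J' [H1 H2]].
  { intros k Hk.
    assert (Hkk : extset k k) by (exists (idm L (src L k)); rewrite rng_id, comp_id_r; auto).
    destruct (proj2 (HJ k) (ex_intro _ k (conj Hk Hkk))) as [[e [He Ee]] _].
    rewrite src_comp in He by congruence.
    exists (comp L m' e). split.
    - rewrite rng_comp; congruence.
    - rewrite Ee. symmetry. apply compA; congruence. }
  exists J'. intro t. split.
  - intros [[a1 [Ha1 Et]] [b1 [Hb1 Et2]]].
    assert (Rt : rng L t = src L l) by (rewrite Et, rng_comp; auto).
    destruct (proj1 (HJ (comp L l t))) as [k [Hk [f [Hf Ef]]]].
    { split.
      - exists a1. rewrite src_comp by congruence. split; auto.
        rewrite Et. apply compA; congruence.
      - exists b1. rewrite src_comp by congruence. split; auto.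
        rewrite Et2. apply compA; congruence. }
    destruct (H1 k Hk) as [k' [Hk' [Hl' Ek]]].
    subst k. rewrite src_comp in Hf by assumption.
    exists k'. split; auto. exists f. split; auto.
    apply (lcancel L l); [congruence| rewrite rng_comp; auto |].
    rewrite Ef. symmetry. apply compA; auto.
  - intros [k' [Hk' [f [Hf ->]]]].
    destruct (H2 k' Hk') as [Hl' Hin].
    destruct (proj2 (HJ (comp L l (comp L k' f)))) as [[g [Hg Eg]] [h [Hh Eh]]].
    { exists (comp L l k'). split; auto. exists f. split.
      - rewrite src_comp; auto.
      - apply compA; auto. }
    assert (Rt : rng L (comp L k' f) = src L l) by (rewrite rng_comp; auto).
    rewrite src_comp in Hg by congruence.
    rewrite src_comp in Hh by congruence.
    split.
    + exists g. split; auto. apply (lcancel L l); [congruence| rewrite rng_comp; congruence|].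
      rewrite Eg. symmetry. apply compA; congruence.
    + exists h. split; auto. apply (lcancel L l); [congruence| rewrite rng_comp; congruence|].
      rewrite Eh. symmetry. apply compA; congruence.
Qed.

Theorem lemma5p5 (Q : Group) (P : Q -> Prop) (HQP : WQLO P) (L : PGraph P)
  (HFA : exists l : Mor L, FA l)
  (x : Mor L -> Prop) (l : Mor L) :
  path_space x -> x l -> path_space (star l x).
Proof.
  intros [[Hne [Hher Hdir]] [k [Hk HFk]]] Hl.
  split; [split; [|split]|].
  - exists (idm L (src L l)). split.
    + rewrite rng_id; reflexivity.
    + rewrite comp_id_r; exact Hl.
  - intros m' m [n [Hn ->]] [Hs Hx]. rewrite rng_comp in Hs by assumption.
    split; auto. apply (Hher _ (comp L l (comp L m' n))); auto.
    exists n. rewrite src_comp by assumption. split; auto.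
    apply compA; auto.
  - intros m1 m2 [H1 X1] [H2 X2].
    destruct (Hdir _ _ X1 X2) as [n [Xn [[a [Ha En]] [b [Hb En2]]]]].
    rewrite src_comp in Ha, Hb by assumption.
    assert (E1 : n = comp L l (comp L m1 a)) by (rewrite En; symmetry; apply compA; auto).
    assert (E2 : n = comp L l (comp L m2 b)) by (rewrite En2; symmetry; apply compA; auto).
    exists (comp L m1 a). split; [|split].
    + split; [rewrite rng_comp; auto| rewrite <- E1; auto].
    + exists a. split; auto.
    + exists b. split; auto. apply (lcancel L l);
        [rewrite rng_comp; auto | rewrite rng_comp; auto | congruence].
  - destruct (Hdir _ _ Hl Hk) as [n [Xn [[a [Ha En]] [c [Hc En2]]]]].
    exists a. split.
    + split; auto. rewrite <- En. auto.
    + apply (FA_strip L l a Ha). rewrite <- En, En2. apply FA_ext; auto.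
Qed.
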